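(* Let $0\le\epsilon\le1/3$, let $f(x)=\frac{1+\epsilon-2x}{1-\epsilon}$, and for an integer $n\ge1$ define the polynomial $C_n(x):=1-\frac{T_n(f(x))}{T_n(f(0))}$, where $T_n$ is the Chebyshev polynomial of degree $n$. Then for any sequence $\boldsymbol\lambda=(\lambda_1,\dots,\lambda_d)$ with $0\le\lambda_i\le1$, $$\gamma_2(\mathcal D_{C_n,\boldsymbol\lambda})\le6n^2-3.$$
   Context: The Chebyshev polynomial $T_n$ is defined by $T_n(\cos\theta)=\cos(n\theta)$. For a continuously differentiable $h$ and a sequence $\boldsymbol\lambda=(\lambda_1,\dots,\lambda_d)$, $\mathcal D_{h,\boldsymbol\lambda}$ is the $d\times d$ matrix with entries $(\mathcal D_{h,\boldsymbol\lambda})_{ij}=\frac{h(\lambda_i)-h(\lambda_j)}{\lambda_i-\lambda_j}$ if $\lambda_i\ne\lambda_j$ and $h'(\lambda_i)$ if $\lambda_i=\lambda_j$. For a $d\times d$ matrix $\mathbf M$, $\gamma_2(\mathbf M)=\inf\max\big(\{\|v_i\|^2:1\le i\le d\}\cup\{\|w_j\|^2:1\le j\le d\}\big)$, the infimum over all families of vectors $v_i,w_j$ with $\mathbf M_{ij}=\langle v_i|w_j\rangle$ for all $i,j$. *)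

(* Defs.v *)
From HB Require Import structures.
From mathcomp Require Import all_boot all_order all_algebra.
From mathcomp Require Import all_classical all_reals.
Set Implicit Arguments. Unset Strict Implicit. Unset Printing Implicit Defensive.
Import Order.TTheory GRing.Theory Num.Theory.
Local Open Scope ring_scope.

Fixpoint cheb (R : nzRingType) (n : nat) : {poly R} :=
  match n with
  | 0 => 1
  | 1 => 'X
  | (m.+1 as k).+1 => 2%:R *: 'X * cheb R k - cheb R m
  end.

(* The divided-difference matrix D_{h,lambda}, for h a polynomial
   (h' is the formal derivative, which equals the usual derivative). *)
Definition divdiff (R : fieldType) (h : {poly R}) (d : nat) (lam : 'I_d -> R)
  : 'M[R]_d :=
  \matrix_(i, j) (if lam i != lam j then (h.[lam i] - h.[lam j]) / (lam i - lam j)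
                  else (h^`()).[lam i]).

Definition rdot (R : realType) (k : nat) (x y : 'rV[R]_k) : R :=
  \sum_(l < k) x 0 l * y 0 l.

Definition gamma2 (R : realType) (d : nat) (M : 'M[R]_d) : R :=
  inf [set x : R | exists (k : nat) (v w : 'I_d -> 'rV[R]_k),
        (forall i j, M i j = rdot (v i) (w j)) /\
        x = Num.max (\big[Num.max/0]_(i < d) rdot (v i) (v i))
                    (\big[Num.max/0]_(j < d) rdot (w j) (w j))]%classic.

Definition fpoly (R : fieldType) (eps : R) : {poly R} :=
  ((1 + eps) / (1 - eps))%:P - (2%:R / (1 - eps)) *: 'X.

Definition Cpoly (R : fieldType) (eps : R) (n : nat) : {poly R} :=
  1 - ((cheb R n).[(fpoly eps).[0]])^-1 *: (cheb R n \Po fpoly eps).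

(* Main.v *)
Require Import Defs.
From HB Require Import structures.
From mathcomp Require Import all_boot all_order all_algebra.
From mathcomp Require Import all_classical all_reals.
From mathcomp Require Import ring lra.
Import Order.TTheory GRing.Theory Num.Theory.
Local Open Scope ring_scope.

Section Ch.
Variable R : realType.

Definition T (n : nat) (x : R) := (cheb R n).[x].
Fixpoint V (n : nat) (x : R) : R :=
  match n with 0 => 0 | 1 => 1 | (m.+1 as k).+1 => 2 * x * V k x - V m x end.

Lemma T0 x : T 0 x = 1. Proof. by rewrite /T /= hornerE. Qed.
Lemma T1 x : T 1 x = x. Proof. by rewrite /T /= hornerX. Qed.
Lemma T_rec n x : T n.+2 x = 2 * x * T n.+1 x - T n x.
Proof. by rewrite /T /= !hornerE. Qed.
Lemma V_rec n x : V n.+2 x = 2 * x * V n.+1 x - V n x.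
Proof. by []. Qed.

Lemma TV n x : T n.+1 x = x * T n x + (x^+2 - 1) * V n x /\ V n.+1 x = T n x + x * V n x.
Proof.
elim: n => [|n [IH1 IH2]]; first by rewrite T1 T0 /=; split; ring.
rewrite T_rec V_rec IH1 IH2; split; ring.
Qed.

Lemma pell n x : T n x ^+ 2 - (x^+2 - 1) * V n x ^+ 2 = 1.
Proof.
elim: n => [|n IH]; first by rewrite T0 /=; ring.
have [-> ->] := TV n x; rewrite -[RHS]IH; ring.
Qed.

Lemma small n x : -1 <= x <= 1 -> -1 <= T n x <= 1 /\ `|V n x| <= n%:R.
Proof.
move=> /andP[x1 x2].
have hT : forall m, -1 <= T m x <= 1.
  move=> m; have h2 := pell m x.
  have h1 : 0 <= V m x ^+ 2 := sqr_ge0 _.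
  have h3 : x ^+ 2 - 1 <= 0 by nra.
  have h4 : (x ^+ 2 - 1) * V m x ^+ 2 <= 0 by rewrite mulr_le0_ge0.
  have h5 : T m x ^+ 2 <= 1 by lra.
  apply/andP; split; nra.
split=> //; elim: n => [|n IH]; first by rewrite normr0.
have [_ ->] := TV n x.
have /andP[t1 t2] := hT n.
apply: (le_trans (ler_normD _ _)); rewrite normrM -natr1 addrC.
apply: lerD; last by rewrite ler_norml t1 t2.

rewrite -[n%:R]mul1r; apply: ler_pM => //; by rewrite ler_norml x1 x2.
Qed.

Lemma big n x a : 1 <= x -> x <= a -> (1 <= T n x <= T n a) /\ (n%:R <= V n x <= V n a).
Proof.
move=> x1 xa; elim: n => [|n [/andP[t1 t2] /andP[v1 v2]]].
  by rewrite !T0 /= !lexx.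
have [-> ->] := TV n x; have [-> ->] := TV n a.
have v0 : 0 <= V n x by apply: le_trans v1.
have s0 : 0 <= x ^+ 2 - 1 by nra.
have sa : x ^+ 2 - 1 <= a ^+ 2 - 1 by nra.
split; apply/andP; split.
- nra.
- apply: lerD; first by apply: ler_pM => //; lra.
  apply: ler_pM => //.
- rewrite -natr1 addrC; apply: lerD => //; nra.
- apply: lerD => //; apply: ler_pM => //; lra.
Qed.

Lemma VleT n x : 1 <= x -> V n x <= n%:R * T n x.
Proof.
move=> x1; elim: n => [|n IH]; first by rewrite /= mul0r.
have [/andP[t1 _] /andP[v1 _]] := big n x x x1 (lexx x).
have [-> ->] := TV n x.
have v0 : 0 <= V n x by apply: le_trans v1.
have n0 : 0 <= n%:R :> R by [].
have h1 : x * V n x <= x * (n%:R * T n x) by rewrite ler_wpM2l //; lra.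
have h2 : 0 <= (n%:R + 1) * ((x ^+ 2 - 1) * V n x).
  apply: mulr_ge0; first lra. apply: mulr_ge0 => //; nra.
have h3 : T n x <= x * T n x by nra.
rewrite -natr1; nra.
Qed.

Definition c (l : nat) : R := if l is 0 then 1 else 2.
Lemma c_ge0 l : 0 <= c l. Proof. by case: l. Qed.

Definition G n x y := \sum_(l < n.+1) c l * T l x * V (n - l) y.

Lemma G0 x y : G 0 x y = 0.
Proof. by rewrite /G big_ord1 /= mulr0. Qed.
Lemma G1 x y : G 1 x y = 1.
Proof. by rewrite /G !big_ord_recr big_ord0 /= T0 /c /= mulr0 !addr0 add0r !mul1r. Qed.

Lemma G_rec n x y : G n.+2 x y = 2 * T n.+1 x + 2 * y * G n.+1 x y - G n x y.
Proof.
rewrite /G big_ord_recr big_ord_recr /= subnn subSnn /= mulr0 addr0 mulr1.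
rewrite [in X in _ = _ + _ * X - _]big_ord_recr /= subnn /= mulr0 addr0.
rewrite [LHS]addrC -addrA mulr_sumr -sumrB; congr (_ + _).
apply: eq_bigr => -[l hl] _ /=.
have -> : (n.+2 - l = (n - l).+2)%N by rewrite !subSn // ltnW.
have -> : (n.+1 - l = (n - l).+1)%N by rewrite subSn.
rewrite V_rec; ring.
Qed.

Lemma G_diff n x y : T n x - T n y = (x - y) * G n x y.
Proof.
suff : (T n x - T n y = (x - y) * G n x y) /\ (T n.+1 x - T n.+1 y = (x - y) * G n.+1 x y) by case.
elim: n => [|n [IH1 IH2]]; first by rewrite G0 G1 !T0 !T1; split; ring.
split=> //; rewrite G_rec !T_rec.
have -> : 2 * x * T n.+1 x - T n x - (2 * y * T n.+1 y - T n y)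
  = 2 * (x - y) * T n.+1 x + 2 * y * (T n.+1 x - T n.+1 y) - (T n x - T n y) by ring.
rewrite IH1 IH2; ring.
Qed.

Lemma G_diag n x : G n x x = n%:R * V n x.
Proof.
suff : (G n x x = n%:R * V n x) /\ (G n.+1 x x = n.+1%:R * V n.+1 x) by case.
elim: n => [|n [IH1 IH2]]; first by rewrite G0 G1 /= mul0r mul1r.
split=> //; rewrite G_rec IH1 IH2 V_rec.
have [-> ->] := TV n x.
rewrite -!natr1; ring.
Qed.

Lemma deriv_diag n x : (cheb R n)^`().[x] = G n x x.
Proof.
suff : ((cheb R n)^`().[x] = G n x x) /\ ((cheb R n.+1)^`().[x] = G n.+1 x x) by case.
elim: n => [|n [IH1 IH2]].
  by rewrite G0 G1 /= derivC derivX !hornerE.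
split=> //; rewrite G_rec -IH1 -IH2 /=.
rewrite derivB derivM derivZ derivX !hornerE -/(T n.+1 x) /=.
ring.
Qed.


Lemma sqrtK2 (z : R) : 0 <= z -> Num.sqrt z * Num.sqrt z = z.
Proof. by move=> h; rewrite -expr2 sqr_sqrtr. Qed.

Lemma gamma2_bound (d m : nat) (M : 'M[R]_d) (p q : 'I_m -> 'I_d -> R) (P Q : 'I_m -> R) (B : R) :
 (forall i j, M i j = \sum_l p l i * q l j) ->
 (forall l i, `|p l i| <= P l) -> (forall l j, `|q l j| <= Q l) ->
 (forall l, 0 <= P l) -> (forall l, 0 <= Q l) ->
 \sum_l P l * Q l <= B -> gamma2 M <= B.
Proof.
move=> hM hp hq P0 Q0 hB.
pose pos l := (0 < P l) && (0 < Q l).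
pose s l := if pos l then Num.sqrt (Q l / P l) else 0.
pose t l := if pos l then Num.sqrt (P l / Q l) else 0.
pose v i : 'rV[R]_m := \row_l (p l i * s l).
pose w j : 'rV[R]_m := \row_l (q l j * t l).
have key : forall i j, M i j = rdot (v i) (w j).
  move=> i j; rewrite hM /rdot; apply: eq_bigr => l _; rewrite !mxE.
  rewrite /s /t; case: ifP => [/andP[P1 Q1]|].
    rewrite mulrACA -sqrtrM ?divr_ge0 ?ltW //.
    have -> : Q l / P l * (P l / Q l) = 1 by field; rewrite ?gt_eqF.
    by rewrite sqrtr1 mulr1.
  move/negbT; rewrite negb_and -!leNgt => /orP[] h.
    have : `|p l i| <= 0 by rewrite (le_trans (hp l i)).
    by rewrite normr_le0 => /eqP ->; rewrite !mul0r.
  have : `|q l j| <= 0 by rewrite (le_trans (hq l j)).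
  by rewrite normr_le0 => /eqP ->; rewrite !mul0r !mulr0.
have sq : forall (a A : R), `|a| <= A -> a * a <= A * A.
  move=> a A h; apply: le_trans (ler_norm (a * a)) _; rewrite normrM.
  by apply: ler_pM.
have bv : forall i, rdot (v i) (v i) <= \sum_l P l * Q l.
  move=> i; rewrite /rdot; apply: ler_sum => l _; rewrite !mxE /s.
  case: ifP => [/andP[P1 Q1]|_]; last by rewrite !mulr0 mulr_ge0.
  rewrite mulrACA sqrtK2; last by rewrite divr_ge0 // ltW.
  have := sq _ _ (hp l i) => h.
  have -> : P l * Q l = P l * P l * (Q l / P l) by field; rewrite gt_eqF.
  by apply: ler_wpM2r => //; rewrite divr_ge0 ?ltW.
have bw : forall j, rdot (w j) (w j) <= \sum_l P l * Q l.
  move=> j; rewrite /rdot; apply: ler_sum => l _; rewrite !mxE /t.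
  case: ifP => [/andP[P1 Q1]|_]; last by rewrite !mulr0 mulr_ge0.
  rewrite mulrACA sqrtK2; last by rewrite divr_ge0 // ltW.
  have := sq _ _ (hq l j) => h.
  have -> : P l * Q l = Q l * Q l * (P l / Q l) by field; rewrite gt_eqF.
  by apply: ler_wpM2r => //; rewrite divr_ge0 ?ltW.
have S0 : 0 <= \sum_l P l * Q l by apply: sumr_ge0 => l _; apply: mulr_ge0.
rewrite /gamma2; set S := (X in inf X).
have hlb : has_lbound S.
  exists 0 => x [k [v' [w' [_ ->]]]].
  rewrite le_max; apply/orP; left.
  apply: (big_ind (fun x => 0 <= x)) => // [a b ha hb|i _]; first by rewrite le_max ha.
  by apply: sumr_ge0 => l _; rewrite -expr2 sqr_ge0.
have inS : S (Num.max (\big[Num.max/0]_(i < d) rdot (v i) (v i))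
                    (\big[Num.max/0]_(j < d) rdot (w j) (w j))).
  by exists m, v, w; split.
apply: le_trans (ge_inf hlb inS) _.
have B0 : 0 <= B by apply: le_trans hB.
rewrite ge_max; apply/andP; split; apply: bigmax_le => //= i _;
  apply: le_trans hB; [exact: bv | exact: bw].
Qed.


Lemma Tbnd l z a : 1 <= a -> -1 <= z <= a -> `|T l z| <= T l a.
Proof.
move=> a1 /andP[z1 z2]; have [/andP[ta1 _] _] := big l a a a1 (lexx a).
case: (lerP z 1) => hz.
  have [/andP[t1 t2] _] := small l z (ltac:(by rewrite z1 hz)).
  by rewrite ler_norml (le_trans t2) // (le_trans _ t1) // lerN2.
have [/andP[t1 t2] _] := big l z a (ltW hz) z2.
by rewrite ger0_norm // (le_trans _ t1).
Qed.

Lemma Vbnd l z a : 1 <= a -> -1 <= z <= a -> `|V l z| <= V l a.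
Proof.
move=> a1 /andP[z1 z2]; have [_ /andP[va1 _]] := big l a a a1 (lexx a).
case: (lerP z 1) => hz.
  have [_ h] := small l z (ltac:(by rewrite z1 hz)).
  exact: le_trans va1.
have [_ /andP[v1 v2]] := big l z a (ltW hz) z2.
by rewrite ger0_norm // (le_trans _ v1).
Qed.

End Ch.
Arguments T {R}. Arguments V {R}. Arguments c {R}. Arguments G {R}.
Arguments T0 {R}. Arguments T1 {R}. Arguments big {R}. Arguments small {R}.
Arguments G_diff {R}. Arguments G_diag {R}. Arguments deriv_diag {R}.
Arguments VleT {R}. Arguments Tbnd {R}. Arguments Vbnd {R}.
Arguments gamma2_bound {R d m M}.

Theorem lemma7 (R : realType) (eps : R) (n d : nat) (lam : 'I_d -> R) :
  0 <= eps -> eps <= 3%:R^-1 -> (1 <= n)%N ->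
  (forall i, 0 <= lam i <= 1) ->
  gamma2 (divdiff (Cpoly eps n) lam) <= 6%:R * (n%:R) ^+ 2 - 3%:R.
Proof.
move=> e0 e3 n1 hlam.
set u := (1 - eps)^-1.
have u0 : 0 < u by rewrite invr_gt0; lra.
have uE : (1 - eps) * u = 1 by rewrite mulfV //; apply/eqP; lra.
have fpE : forall z, (fpoly eps).[z] = (1 + eps) * u - 2 * u * z.
  by move=> z; rewrite /fpoly !hornerE /u; ring.
set a := (fpoly eps).[0].
have aE : a = (1 + eps) * u by rewrite /a fpE; ring.
have a1 : 1 <= a by rewrite aE; nra.
set b := 2 * u.
have b3 : b <= 3 by rewrite /b; nra.
set xs := fun i => (fpoly eps).[lam i].
have xsb : forall i, -1 <= xs i <= a.
  move=> i; have /andP[l0 l1] := hlam i; rewrite /xs fpE aE.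
  apply/andP; split; nra.
have Ta1 : 1 <= T n a by have [/andP[] ] := big n a a a1 (lexx a).
set K := b / T n a.
have K0 : 0 < K by rewrite /K divr_gt0 //; [rewrite /b; lra | lra].
have CE : forall z, (Cpoly eps n).[z] = 1 - (T n a)^-1 * T n (fpoly eps).[z].
  by move=> z; rewrite /Cpoly hornerD hornerN hornerZ horner_comp hornerC.
have entry : forall i j, divdiff (Cpoly eps n) lam i j = K * G n (xs i) (xs j).
  move=> i j; rewrite /divdiff mxE; case: ifP => [hne|/negbT].
    rewrite !CE.
    have hx : xs i - xs j = - b * (lam i - lam j) by rewrite /xs !fpE /b; ring.
    have E : T n (xs i) = T n (xs j) + (xs i - xs j) * G n (xs i) (xs j).
      by rewrite -G_diff; ring.
    rewrite -/(xs i) -/(xs j) E hx /K; field.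
    by rewrite subr_eq0 hne gt_eqF //; lra.
  rewrite negbK => /eqP hij; rewrite /xs -hij -/(xs i).
  have dF : (fpoly eps)^`() = (- b)%:P.
    by rewrite /fpoly derivB derivC derivZ derivX sub0r alg_polyC -polyCN /b /u; congr (_%:P); ring.
  rewrite /Cpoly derivB derivZ deriv_comp.
  have -> : (1 : {poly R})^`() = 0 by rewrite -polyC1 derivC.
  rewrite dF sub0r hornerN hornerZ hornerM horner_comp hornerC -/(xs i) -/a.
  rewrite deriv_diag /K; rewrite /T; field.
  by rewrite gt_eqF // -/(T n a); lra.
apply: (gamma2_bound (fun l i => K * c l * T l (xs i)) (fun l j => V (n - l) (xs j))
                     (fun l => K * c l * T l a) (fun l => V (n - l) a)).
- by move=> i j; rewrite entry /G mulr_sumr; apply: eq_bigr => l _; ring.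
- move=> l i; have Kc : 0 <= K * c l by apply: mulr_ge0; [exact: ltW | exact: c_ge0].
  rewrite normrM ger0_norm //.
  by rewrite ler_wpM2l //; apply: Tbnd a1 (xsb i).
- by move=> l j; apply: Vbnd a1 (xsb j).
- move=> l; have [/andP[t1 _] _] := big l a a a1 (lexx a).
  apply: mulr_ge0; [apply: mulr_ge0; [exact: ltW | exact: c_ge0] | lra].
- move=> l; have [_ /andP[v1 _]] := big (n - l)%N a a a1 (lexx a).
  by apply: le_trans v1.
have -> : \sum_(l < n.+1) K * c l * T l a * V (n - l) a = K * G n a a.
  by rewrite /G mulr_sumr; apply: eq_bigr => l _; ring.
rewrite G_diag.
have hV := VleT n a a1.
have n0 : 0 <= n%:R :> R by [].
have n1' : 1 <= n%:R :> R by rewrite ler1n.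
have h1 : n%:R * V n a <= n%:R ^+ 2 * T n a by rewrite expr2 -mulrA ler_wpM2l.
have h2 := ler_wpM2l (ltW K0) h1.
have h3 : K * (n%:R ^+ 2 * T n a) = b * n%:R ^+ 2.
  by rewrite /K; field; rewrite gt_eqF //; lra.
rewrite h3 in h2.
have h4 : 0 <= n%:R ^+ 2 :> R by apply: sqr_ge0.
have h5 : 1 <= n%:R ^+ 2 :> R by nra.
nra.
Qed.
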